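(* For $\mu\in\mathbb{R}$, $\sigma>0$, $\alpha\in\mathbb{R}$, let $X\sim\mathcal{N}(\mu,\sigma)$ and define $I(\mu,\sigma,\alpha)=(\mu-\alpha)\left(1-F_X(\alpha)\right)+\sigma^2 f_X(\alpha)$. Then $I$ is always convex in $\mu$, i.e. $\frac{\partial^2}{\partial\mu^2}I(\mu,\sigma,\alpha)\ge0$, and $I$ is convex in $\sigma$, i.e. $\frac{\partial^2}{\partial\sigma^2}I(\mu,\sigma,\alpha)\ge0$, whenever $\alpha\le\mu-\sqrt{\tfrac32}\,\sigma$ or $\alpha\ge\mu+\sqrt{\tfrac32}\,\sigma$.
   Context: $\mathcal{N}(\mu,\sigma)$ denotes the normal distribution with mean $\mu$ and standard deviation $\sigma$; $f_X$ and $F_X$ are the density and cumulative distribution function of $X$ (which depend on $\mu,\sigma$). *)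

(* Defs.v *)
From Stdlib Require Import Reals.
From Coquelicot Require Export Coquelicot.
Open Scope R_scope.

Definition normal_pdf (mu sigma x : R) : R :=
  / (sigma * sqrt (2 * PI)) * exp (- (x - mu) ^ 2 / (2 * sigma ^ 2)).

Definition normal_cdf (mu sigma a : R) : R :=
  RInt_gen (normal_pdf mu sigma) (Rbar_locally m_infty) (at_point a).

Definition I_fun (mu sigma alpha : R) : R :=
  (mu - alpha) * (1 - normal_cdf mu sigma alpha)
  + sigma ^ 2 * normal_pdf mu sigma alpha.

(* Main.v *)
Require Import Defs.
From Stdlib Require Import Reals Lra Classical.
From Coquelicot Require Import Coquelicot.
Open Scope R_scope.

Lemma exp_le_mono a b : a <= b -> exp a <= exp b.
Proof. intros H. destruct (Rle_lt_or_eq_dec a b H) as [H1|H1].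
  apply Rlt_le, exp_increasing, H1. subst; lra. Qed.

Lemma sqrt2pi_pos : 0 < sqrt (2 * PI).
Proof. apply sqrt_lt_R0. pose proof PI_RGT_0. lra. Qed.

Lemma cont_pdf m s x : continuous (normal_pdf m s) x.
Proof. apply (ex_derive_continuous (normal_pdf m s)). unfold normal_pdf. auto_derive. auto. Qed.

Lemma ex_RInt_pdf m s a b : ex_RInt (normal_pdf m s) a b.
Proof. apply (ex_RInt_continuous (V:=R_CompleteNormedModule)). intros; apply cont_pdf. Qed.

Lemma pdf_pos m s x : 0 < s -> 0 <= normal_pdf m s x.
Proof. intros Hs. unfold normal_pdf. pose proof sqrt2pi_pos.
  apply Rmult_le_pos. apply Rlt_le, Rinv_0_lt_compat, Rmult_lt_0_compat; auto.
  apply Rlt_le, exp_pos. Qed.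

Lemma lemA (f : R -> R) b l :
  (forall x, continuous f x) ->
  (forall eps : posreal, exists M, forall x, x < M -> Rabs (RInt f x b - l) < eps) ->
  is_RInt_gen f (Rbar_locally m_infty) (at_point b) l.
Proof.
  intros Hc H. unfold is_RInt_gen, filterlimi, filter_le, filtermapi.
  intros P [eps HP].
  destruct (H eps) as [M HM].
  apply (Filter_prod _ _ _ (fun x => x < M) (fun y => y = b)).
  - exists M. auto.
  - reflexivity.
  - intros x y Hx Hy. simpl. subst y. exists (RInt f x b). split.
    + apply (RInt_correct (V:=R_CompleteNormedModule)), (ex_RInt_continuous (V:=R_CompleteNormedModule)). intros; auto.
    + apply HP. unfold ball; simpl; unfold AbsRing_ball, abs, minus, plus, opp; simpl.
      apply HM; auto.
Qed.

Definition phi := normal_pdf 0 1.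
Definition G x := RInt phi x 0.

Lemma phi_bound t : phi t <= exp (t + /2).
Proof.
  unfold phi, normal_pdf. pose proof sqrt2pi_pos.
  assert (Hs: 1 < sqrt (2*PI)).
  { rewrite <- sqrt_1. apply sqrt_lt_1_alt. pose proof PI_RGT_0. pose proof PI2_1. lra. }
  assert (exp (- (t - 0) ^ 2 / (2 * 1 ^ 2)) <= exp (t + /2)).
  { apply exp_le_mono. assert (0 <= (t+1)^2) by (apply pow2_ge_0). lra. }
  assert (0 < / (1 * sqrt (2*PI)) <= 1).
  { rewrite Rmult_1_l. split. apply Rinv_0_lt_compat; lra.
    rewrite <- Rinv_1. apply Rinv_le_contravar; lra. }
  pose proof (exp_pos (- (t - 0) ^ 2 / (2 * 1 ^ 2))).
  nra.
Qed.

Lemma G_bound x : x <= 0 -> G x <= exp (/2).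
Proof.
  intros Hx. unfold G.
  assert (Hi: is_RInt (fun t => exp (t + /2)) x 0 (minus (exp (0 + /2)) (exp (x + /2)))).
  { apply (is_RInt_derive (fun t => exp (t + /2))).
    - intros y _. auto_derive; auto. ring.
    - intros y _. apply (ex_derive_continuous (fun t => exp (t + /2))). auto_derive. auto. }
  apply Rle_trans with (RInt (fun t => exp (t + /2)) x 0).
  - apply RInt_le; auto. apply ex_RInt_pdf. eexists; eauto.
    intros; apply phi_bound.
  - rewrite (is_RInt_unique _ _ _ _ Hi). unfold minus, plus, opp; simpl.
    rewrite Rplus_0_l. pose proof (exp_pos (x + /2)). lra.
Qed.

Lemma G_chasles x y : G x = RInt phi x y + G y.
Proof. unfold G. rewrite <- (RInt_Chasles phi x y 0); try apply ex_RInt_pdf. reflexivity. Qed.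

Lemma G_mono x y : x <= y -> G y <= G x.
Proof. intros H. rewrite (G_chasles x y).
  assert (0 <= RInt phi x y). { apply RInt_ge_0; auto. apply ex_RInt_pdf.
    intros; apply pdf_pos; lra. } lra. Qed.

Lemma G_lim : exists L, forall eps : posreal, exists M, forall x, x < M -> Rabs (G x - L) < eps.
Proof.
  set (E := fun v => exists x, x <= 0 /\ v = G x).
  assert (Hb : bound E). { exists (exp (/2)). intros v [x [Hx ->]]. apply G_bound; auto. }
  assert (Hn : exists v, E v). { exists (G 0). exists 0. split; auto; lra. }
  destruct (completeness E Hb Hn) as [l [Hub Hlub]].
  exists l. intros eps.
  destruct (classic (exists x, x <= 0 /\ l - eps < G x)) as [[x0 [Hx0 Hg]]|Hno].
  - exists x0. intros x Hx.
    assert (G x0 <= G x) by (apply G_mono; lra).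
    assert (G x <= l) by (apply Hub; exists x; split; auto; lra).
    apply Rabs_def1; pose proof (cond_pos eps); lra.
  - exfalso. assert (l <= l - eps).
    { apply Hlub. intros v [x [Hx ->]]. apply Rnot_lt_le. intro. apply Hno. exists x; auto. }
    pose proof (cond_pos eps); lra.
Qed.

Definition Phi0 z := RInt phi 0 z.

Lemma pdf_scale m s y : 0 < s -> normal_pdf m s y = /s * phi ((y-m)/s).
Proof. intros Hs. unfold phi, normal_pdf. pose proof sqrt2pi_pos.
  replace (- ((y - m) / s - 0) ^ 2 / (2 * 1 ^ 2)) with (- (y - m) ^ 2 / (2 * s ^ 2)) by (field; lra).
  field. lra. Qed.

Lemma cdf_formula L m s a : 0 < s ->
  (forall eps : posreal, exists M, forall x, x < M -> Rabs (G x - L) < eps) ->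
  normal_cdf m s a = L + Phi0 ((a-m)/s).
Proof.
  intros Hs HL. unfold normal_cdf. apply is_RInt_gen_unique. apply lemA.
  { intros; apply cont_pdf. }
  intros eps. destruct (HL eps) as [M HM]. exists (m + s*M). intros x Hx.
  pose proof (RInt_comp_lin (V:=R_CompleteNormedModule) phi (/s) (-m/s) x a (ex_RInt_pdf _ _ _ _)) as Hc.
  unfold scal in Hc; simpl in Hc; unfold mult in Hc; simpl in Hc.
  rewrite (RInt_ext (normal_pdf m s) (fun y => /s * phi (/s*y + -m/s))).
  2:{ intros y _. rewrite pdf_scale; auto. f_equal. f_equal. field. lra. }
  rewrite Hc.
  replace (/s*x + -m/s) with ((x-m)/s) by (field; lra).
  replace (/s*a + -m/s) with ((a-m)/s) by (field; lra).
  rewrite <- (RInt_Chasles phi ((x-m)/s) 0 ((a-m)/s)); try apply ex_RInt_pdf.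
  unfold plus; simpl. fold (G ((x-m)/s)). unfold Phi0.
  replace (G ((x - m) / s) + RInt phi 0 ((a - m) / s) - (L + RInt phi 0 ((a - m) / s)))
    with (G ((x - m) / s) - L) by ring.
  apply HM. apply (Rmult_lt_reg_l s); auto. unfold Rdiv. 
  replace (s * ((x - m) * / s)) with (x - m) by (field; lra). lra.
Qed.

Lemma Phi0_deriv z : is_derive Phi0 z (phi z).
Proof. apply (is_derive_RInt phi Phi0 0 z).
  - apply filter_forall. intros b. apply (RInt_correct (V:=R_CompleteNormedModule)). apply ex_RInt_pdf.
  - apply cont_pdf. Qed.

Lemma pdf_dmu s a t : 0 < s -> is_derive (fun t => normal_pdf t s a) t (normal_pdf t s a * (a - t) / s^2).
Proof. intros Hs. pose proof sqrt2pi_pos. unfold normal_pdf. auto_derive. auto.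
  replace (- ((a + - t) * ((a + - t) * 1)) * / (2 * (s * (s * 1)))) with (- (a - t) ^ 2 / (2 * s ^ 2)) by (field; lra).
  field; lra. Qed.

Lemma pdf_dsig m a s : 0 < s -> is_derive (fun s => normal_pdf m s a) s
   (normal_pdf m s a * (- / s + (a - m)^2 / s^3)).
Proof. intros Hs. pose proof sqrt2pi_pos. unfold normal_pdf. auto_derive.
  split; [|split; [|auto]]. apply Rgt_not_eq, Rlt_gt, Rmult_lt_0_compat; lra. nra.
  replace (- ((a - m) * ((a - m) * 1)) * / (2 * (s * (s * 1)))) with (- (a - m) ^ 2 / (2 * s ^ 2)) by (field; lra).
  field; lra. Qed.


Theorem lemma5 (mu sigma alpha : R) (hsigma : 0 < sigma) :
  (exists d : R, is_derive_n (fun m => I_fun m sigma alpha) 2 mu d /\ 0 <= d)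
  /\
  ((alpha <= mu - sqrt (3 / 2) * sigma \/ alpha >= mu + sqrt (3 / 2) * sigma) ->
   exists d : R, is_derive_n (fun s => I_fun mu s alpha) 2 sigma d /\ 0 <= d).
Proof.
  destruct G_lim as [L HL].
  pose proof sqrt2pi_pos as Hsq.
  split.
  - set (s := sigma). set (a := alpha).
    set (g1 := fun t => 1 - (L + Phi0 ((a - t) / s))).
    assert (Hd1 : forall t, is_derive (fun m => I_fun m s a) t (g1 t)).
    { intros t. pose (p := fun t => normal_pdf t s a).
      apply (is_derive_ext (fun t => (t - a) * (1 - (L + Phi0 ((a - t) / s))) + s^2 * p t)).
      { intros u. unfold I_fun, p. rewrite (cdf_formula L u s a); auto. }
      auto_derive.
      { split; [eexists; apply Phi0_deriv | split; [eexists; apply pdf_dmu; exact hsigma | auto]]. }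
      rewrite (is_derive_unique (fun x => Phi0 x) _ _ (Phi0_deriv _)).
      replace (Derive (fun x : R => p x) t) with (normal_pdf t s a * (a - t) / s^2).
      2:{ symmetry. apply is_derive_unique. apply pdf_dmu; exact hsigma. }
      unfold g1. rewrite (pdf_scale t s a) by exact hsigma.
      change ((a + - t) * / s) with ((a - t)/s).
      field. unfold s; lra. }
    exists (normal_pdf mu s a). split; [|apply pdf_pos; exact hsigma].
    simpl.
    apply (is_derive_ext g1 (fun x : R => Derive (fun x0 : R => I_fun x0 s a) x) mu).
    { intros t. symmetry. apply is_derive_unique. apply Hd1. }
    unfold g1. auto_derive.
    { eexists; apply Phi0_deriv. }
    rewrite (is_derive_unique (fun x => Phi0 x) _ _ (Phi0_deriv _)).
    rewrite (pdf_scale mu s a) by exact hsigma.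
    change ((a + - mu) * / s) with ((a - mu)/s).
    field. unfold s; lra.
  - intros _.
    set (m := mu). set (a := alpha).
    set (g2 := fun s => s * normal_pdf m s a).
    assert (Hd2 : forall s, 0 < s -> is_derive (fun s => I_fun m s a) s (g2 s)).
    { intros s Hs. pose (q := fun s => normal_pdf m s a).
      apply (is_derive_ext_loc (fun s => (m - a) * (1 - (L + Phi0 ((a - m) / s))) + s^2 * q s)).
      { exists (mkposreal s Hs). intros u Hu. unfold ball in Hu; simpl in Hu;
        unfold AbsRing_ball, abs, minus, plus, opp in Hu; simpl in Hu.
        apply Rabs_def2 in Hu. unfold I_fun, q. rewrite (cdf_formula L m u a); auto. lra. }
      auto_derive.
      { split; [eexists; apply Phi0_deriv | split; [apply Rgt_not_eq; lra | split; [eexists; apply pdf_dsig; exact Hs | auto]]]. }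
      rewrite (is_derive_unique (fun x => Phi0 x) _ _ (Phi0_deriv _)).
      replace (Derive (fun x : R => q x) s) with (normal_pdf m s a * (- / s + (a - m)^2 / s^3)).
      2:{ symmetry. apply is_derive_unique. apply pdf_dsig; exact Hs. }
      unfold g2, q. rewrite (pdf_scale m s a) by exact Hs.
      change ((a - m) * / s) with ((a - m) / s).
      field. lra. }
    exists (normal_pdf m sigma a * (a - m)^2 / sigma^2). split.
    2:{ apply Rmult_le_pos. apply Rmult_le_pos. apply pdf_pos; exact hsigma. apply pow2_ge_0.
        apply Rlt_le, Rinv_0_lt_compat. nra. }
    simpl.
    apply (is_derive_ext_loc g2 (fun x : R => Derive (fun x0 : R => I_fun m x0 a) x) sigma).
    { exists (mkposreal sigma hsigma). intros u Hu. unfold ball in Hu; simpl in Hu;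
        unfold AbsRing_ball, abs, minus, plus, opp in Hu; simpl in Hu.
        apply Rabs_def2 in Hu. symmetry. apply is_derive_unique. apply Hd2. lra. }
    pose (q := fun s => normal_pdf m s a).
    apply (is_derive_ext (fun s => s * q s)). { intros; reflexivity. }
    auto_derive.
    { eexists; apply pdf_dsig; exact hsigma. }
    replace (Derive (fun x : R => q x) sigma) with (normal_pdf m sigma a * (- / sigma + (a - m)^2 / sigma^3)).
    2:{ symmetry. apply is_derive_unique. apply pdf_dsig; exact hsigma. }
    unfold q. field. lra.
Qed.
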